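(* For any $k \ge 1$, the total number of binary words (of any length, including the empty word) that avoid $0^i1^{k-i}$ for all $i \in \{0,1,\dots,k\}$ is $C_{k+1} - 1$; equivalently $\sum_{m=0}^{2k-2} B(k,m) = C_{k+1}-1$, where $C_n=\frac{1}{n+1}\binom{2n}{n}$.
   Context: A binary word avoids a word $u$ if $u$ does not occur in it as a (not necessarily contiguous) subsequence. For $k\ge1$, $m \ge 0$, $B(k,m)$ is the number of such avoiding binary words of length $m$ (it is $0$ for $m \ge 2k-1$). *)

(* Defs.v *)
From mathcomp Require Import all_boot.
Set Implicit Arguments. Unset Strict Implicit. Unset Printing Implicit Defensive.

(* Binary words: letters 0 = false, 1 = true.  Occurrence as a
   (not necessarily contiguous) subsequence is MathComp's [subseq]. *)
Definition avoids (u w : seq bool) : bool := ~~ subseq u w.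

Definition pat (k i : nat) : seq bool := nseq i false ++ nseq (k - i) true.

Definition avoids_all (k : nat) (w : seq bool) : bool :=
  all (fun i => avoids (pat k i) w) (iota 0 k.+1).

Definition B (k m : nat) : nat := #|[set w : m.-tuple bool | avoids_all k w]|.

Definition catalan (n : nat) : nat := 'C(n.*2, n) %/ n.+1.

(* Main.v *)
Require Import Defs.
From mathcomp Require Import all_boot zify.
Set Implicit Arguments. Unset Strict Implicit. Unset Printing Implicit Defensive.

Fixpoint allw (m : nat) : seq (seq bool) :=
  if m is m'.+1 then [seq true :: t | t <- allw m'] ++ [seq false :: t | t <- allw m']
  else [:: [::]].



Lemma mem_allw m s : (s \in allw m) = (size s == m).
Proof.
elim: m s => [|m IH] [|b s] //=.
- rewrite mem_cat; apply/negbTE/negP; case/orP; by case/mapP.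
- rewrite mem_cat eqSS -IH; case: b.
  + rewrite (mem_map (f := cons true)); last by move=> x y [].
    apply/orP/idP => [[//|/mapP[? _ //]]|]; by left.
  + rewrite (mem_map (f := cons false)); last by move=> x y [].
    apply/orP/idP => [[/mapP[? _ //]|//]|]; by right.
Qed.

Lemma uniq_allw m : uniq (allw m).
Proof.
elim: m => [|m IH] //=.
rewrite cat_uniq !map_inj_uniq // ?IH; try by move=> x y [].
rewrite andbT /=; apply/hasPn => x /mapP[t _ ->]; apply/negP => /mapP[u _ []].
by [].
Qed.

Lemma card_allw m (P : pred (seq bool)) :
  #|[set w : m.-tuple bool | P w]| = count P (allw m).
Proof.
rewrite cardsE cardE /enum_mem size_filter.
have -> : count (mem [pred w : m.-tuple bool | P w]) (Finite.enum (m.-tuple bool))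
  = count P (map val (Finite.enum (m.-tuple bool))) by rewrite count_map.
apply/permP/uniq_perm.
- rewrite map_inj_uniq; [rewrite -enumT; exact: enum_uniq | exact: val_inj].
- exact: uniq_allw.
move=> s; rewrite mem_allw; apply/mapP/idP => [[t _ ->]|Hs]; first by rewrite size_tuple.
by exists (Tuple Hs).
Qed.
Definition zeros (t : seq bool) := count negb t.
Definition ones (t : seq bool) := count id t.
Definition ff k t i := ~~ subseq (nseq (k - i) true ++ nseq i false) t.
Definition PP k t := all (ff k t) (iota 0 k.+1).

Lemma avoids_rev k w : avoids_all k w = PP k (rev w).
Proof.
apply: eq_all => i; by rewrite /avoids /ff -subseq_rev /pat rev_cat !rev_nseq.
Qed.

Lemma subF i t : subseq (nseq i false) t = (i <= zeros t).
Proof.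
elim: t i => [|b t IH] [|i] //=.
by case: b; rewrite /zeros /= -?IH.
Qed.

Lemma subT i t : subseq (nseq i true) t = (i <= ones t).
Proof.
elim: t i => [|b t IH] [|i] //=.
by case: b; rewrite /ones /= -?IH.
Qed.

Lemma PP_split k t : PP k t = all (ff k t) (iota 0 k) && (zeros t < k).
Proof.
rewrite /PP -addn1 iotaD all_cat /= andbT /ff subnn /= subF.
by rewrite ltnNge.
Qed.

Lemma PP_bound k t : PP k t -> (zeros t < k) && (ones t < k).
Proof.
move=> H; have := H; rewrite PP_split => /andP[_ ->] /=.
move/allP: H => /(_ 0); rewrite mem_iota /= /ff subn0 cats0 subT ltnNge.
by move=> /(_ isT); rewrite ltnNge.
Qed.

Lemma PP_nil k : PP k [::] = (0 < k).
Proof.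
case: k => [|k] //.
apply/allP => i; rewrite mem_iota /ff => /andP[_ Hi] /=.
by rewrite -size_eq0 size_cat !size_nseq subnK.
Qed.

Lemma PP_0 t : PP 0 t = false.
Proof. by rewrite /PP /= /ff sub0seq. Qed.

Lemma PP_true k t : PP k.+1 (true :: t) = PP k t.
Proof.
rewrite PP_split.
have -> : all (ff k.+1 (true :: t)) (iota 0 k.+1) = PP k t.
  apply: eq_in_all => i; rewrite mem_iota /= => Hi.
  by rewrite /ff subSn.
case H: (PP k t) => //=.
move/PP_bound: H => /andP[H _]; rewrite /zeros /= -/(zeros t); exact: ltnW.
Qed.

Lemma PP_false k t : PP k.+1 (false :: t) = PP k.+1 t && (zeros t < k).
Proof.
rewrite !PP_split.
have -> : all (ff k.+1 (false :: t)) (iota 0 k.+1) = all (ff k.+1 t) (iota 0 k.+1).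
  apply: eq_in_all => i; rewrite mem_iota /= => Hi.
  by rewrite /ff subSn.
have -> : zeros (false :: t) < k.+1 = (zeros t < k) by [].
case: (ltnP (zeros t) k) => H; last by rewrite !andbF.
by rewrite !andbT ltnS (ltnW H) andbT.
Qed.

Definition cnt k m z := count (fun t => PP k t && (zeros t == z)) (allw m).

Lemma cnt_0m m z : cnt 0 m z = 0.
Proof.
rewrite /cnt (eq_count (a2 := pred0)) ?count_pred0 // => t; by rewrite PP_0.
Qed.

Lemma cnt_k0 k z : cnt k 0 z = (0 < k) && (z == 0).
Proof. by rewrite /cnt /= PP_nil addn0 eq_sym. Qed.

Lemma cnt_rec k m z : cnt k.+1 m.+1 z =
  cnt k m z + (if z is z'.+1 then (z' < k) * cnt k.+1 m z' else 0).
Proof.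
rewrite /cnt /= count_cat !count_map; congr (_ + _).
  by apply: eq_count => t /=; rewrite PP_true.
case: z => [|z].
  by rewrite (eq_count (a2 := pred0)) ?count_pred0 // => t /=; rewrite andbF.
case: ltnP => Hz.
- rewrite mul1n; apply: eq_count => t /=; rewrite PP_false.
  have -> : (zeros (false :: t) == z.+1) = (zeros t == z) by [].
  by case E: (zeros t == z); rewrite ?andbF // (eqP E) Hz andbT.
- rewrite mul0n (eq_count (a2 := pred0)) ?count_pred0 // => t /=.
  rewrite PP_false.
  have -> : (zeros (false :: t) == z.+1) = (zeros t == z) by [].
  case E: (zeros t == z); rewrite ?andbF // (eqP E) andbT.
  by rewrite ltnNge Hz andbF.
Qed.

Lemma cnt_vanish k m z : (z + k <= m) || (k <= z) -> cnt k m z = 0.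
Proof.
move=> H; rewrite /cnt (eq_in_count (a2 := pred0)) ?count_pred0 // => t.
rewrite mem_allw => /eqP Hs /=.
apply/negbTE/negP => /andP[/PP_bound /andP[Hz Ho] /eqP Ez].
have : ones t + zeros t = m.
  rewrite -Hs -(count_predC id t); congr (_ + _).
move: H; rewrite -Ez => H E.
case/orP: H => H.
- have : zeros t + k <= ones t + zeros t by rewrite E.
  by rewrite addnC leq_add2r leqNgt Ho.
- by rewrite leqNgt Hz in H.
Qed.

Definition D k z := \sum_(0 <= m < z + k) cnt k m z.

Lemma D_rec k z : z < k.+1 ->
  D k.+1 z = (z == 0) + D k z + (if z is z'.+1 then D k.+1 z' else 0).
Proof.
move=> Hz; rewrite /D addnS big_nat_recl // cnt_k0 /=.
rewrite (eq_bigr (fun m => cnt k m z + (if z is z'.+1 then (z' < k) * cnt k.+1 m z' else 0)));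
  last by move=> i _; rewrite cnt_rec.
rewrite big_split /= addnA; congr (_ + _).
case: z Hz => [|z] Hz.
  by rewrite big1.
by rewrite ltnS in Hz; rewrite Hz addSnnS; apply: eq_bigr => i _; rewrite mul1n.
Qed.

Lemma D_big k z : k <= z -> D k z = 0.
Proof. by move=> H; rewrite /D big1 // => i _; rewrite cnt_vanish // H orbT. Qed.

Lemma D_0 k : D k 0 = k.
Proof.
elim: k => [|k IH]; first by rewrite D_big.
by rewrite D_rec // IH addn0.
Qed.

Lemma sumD k z : z <= k -> D k.+1 z = 1 + \sum_(0 <= z' < z.+1) D k z'.
Proof.
elim: z => [|z IH] Hz.
  by rewrite D_rec // big_nat1 addn0.
rewrite D_rec // IH 1?ltnW // big_nat_recr //= add0n [in RHS]big_nat_recr //=.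
rewrite big_nat_recr //=; lia.
Qed.

Lemma Dclosed n z : z < n -> D n z + 'C(n + z.+1, z) = 'C(n + z.+1, z.+1).
Proof.
elim: n z => [|n IHn] z Hz //.
elim: z Hz => [|z IHz] Hz.
  by rewrite D_0 bin0 bin1 addn1.
rewrite D_rec //.
have H1 : D n z.+1 + 'C(n.+1 + z.+1, z.+1) = 'C(n.+1 + z.+1, z.+2).
  case: (ltnP z.+1 n) => Hn.
    have -> : n.+1 + z.+1 = n + z.+2 by lia.
    exact: IHn.
  have Ez : z.+1 = n by apply/eqP; rewrite eqn_leq Hn -ltnS Hz.
  rewrite D_big ?Ez // add0n.
  have -> : n.+1 + n = (n + n).+1 by rewrite addSn.
  rewrite -(bin_sub (n := (n + n).+1) (m := n)); last by lia.
  by congr 'C(_, _); lia.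
have H2 := IHz (ltnW Hz).
move: H1 H2; set P := n.+1 + z.+1 => H1 H2.
have -> : n.+1 + z.+2 = P.+1 by rewrite /P addnS.
rewrite (binS P z.+1) (binS P z) /=; lia.
Qed.

Lemma sum_eq_nat y K : \sum_(0 <= z < K) ((y == z) : nat) = (y < K).
Proof.
elim: K => [|K IH]; first by rewrite big_nil.
rewrite big_nat_recr //= IH.
case: (ltngtP y K) => H.
- by rewrite ltnS (ltnW H).
- by rewrite ltnS leqNgt H.
- by rewrite H ltnSn.
Qed.

Lemma count_split (a : pred (seq bool)) (f : seq bool -> nat) K s :
  (forall x, a x -> f x < K) ->
  count a s = \sum_(0 <= z < K) count (fun x => a x && (f x == z)) s.
Proof.
move=> Hf; elim: s => [|x s IH]; first by rewrite big1.
rewrite /= (big_split) /= -IH; congr (_ + _).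
case Ha: (a x) => /=; last by rewrite big1.
by rewrite sum_eq_nat Hf.
Qed.

Lemma B_count k m : B k m = \sum_(0 <= z < k) cnt k m z.
Proof.
rewrite /B card_allw.
have -> : count (avoids_all k) (allw m) = count (PP k) (allw m).
  transitivity (count (PP k) (map rev (allw m))).
    by rewrite count_map; apply: eq_count => w; exact: avoids_rev.
  apply/permP/uniq_perm.
  - rewrite map_inj_uniq; [exact: uniq_allw | exact: (can_inj revK)].
  - exact: uniq_allw.
  move=> s; rewrite -{1}(revK s) (mem_map (can_inj revK)) !mem_allw size_rev //.
rewrite (count_split (f := zeros) (K := k)) //.
by move=> x /PP_bound /andP[].
Qed.

Lemma catalanD k : D k.+1 k = catalan k.+1.
Proof.
have H := Dclosed (n := k.+1) (z := k) (ltnSn k).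
have H2 := mul_bin_left (k.+1 + k.+1) k.
rewrite /catalan -addnn.
have E : k.+1 + k.+1 - k = k.+2 by lia.
rewrite E in H2.
set a := 'C(k.+1 + k.+1, k.+1) in H H2 *.
set b := 'C(k.+1 + k.+1, k) in H H2.
have -> : a = D k.+1 k * k.+2 by nia.
by rewrite mulnK.
Qed.

Theorem corollary3p7 (k : nat) (hk : 1 <= k) :
  \sum_(0 <= m < (2 * k - 2).+1) B k m = catalan k.+1 - 1.
Proof.
under eq_bigr => m _ do rewrite B_count.
rewrite exchange_big /=.
rewrite (eq_big_nat _ _ (F2 := fun z => D k z)); last first.
  move=> z /andP[_ Hz].
  rewrite (big_cat_nat (n := z + k)) //=; last by lia.
  have -> : \sum_(z + k <= i < (2 * k - 2).+1) cnt k i z = 0.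
    rewrite big_nat_cond big1 // => i /andP[/andP[Hi _] _].
    by rewrite cnt_vanish // Hi.
  by rewrite addn0.
rewrite -catalanD sumD // big_nat_recr //= D_big // addn0.
lia.
Qed.
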